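(* Let $\mathcal{H}$ be a complex Hilbert space and $T\in\mathbb{B}(\mathcal{H})$ with Cartesian decomposition $T=T_1+iT_2$, $T_1=\frac{T+T^*}{2}$, $T_2=\frac{T-T^*}{2i}$. Then the quantity $2\omega^2(T)-\max(\alpha(T),\alpha(T^* ))+D(T)$ is nonnegative and \[ \|T\|\le \sqrt{2\,\omega^2(T)-\max\big(\alpha(T),\alpha(T^* )\big)+D(T)}\le 2\,\omega(T). \]
   Context: $\mathbb{B}(\mathcal{H})$ denotes the bounded linear operators on $\mathcal{H}$. For $T\in\mathbb{B}(\mathcal{H})$: $\omega(T)=\sup\{|\langle Tx,x\rangle| : \|x\|=1\}$ (numerical radius); $\|T\|$ is the operator norm; $\alpha(T)=\inf_{\|x\|=1}\|Tx\|^2$; $D(T)=2\min(\|T_1\|^2,\|T_2\|^2)$ where $T_1=\frac{T+T^*}{2}$, $T_2=\frac{T-T^*}{2i}$. *)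

(* Defs.v *)
From Stdlib Require Import Reals Lra ClassicalEpsilon.
Open Scope R_scope.

Definition C : Type := (R * R)%type.
Definition Cre (z : C) : R := fst z.
Definition Cim (z : C) : R := snd z.
Definition Cadd (z w : C) : C := (fst z + fst w, snd z + snd w).
Definition Cmul (z w : C) : C :=
  (fst z * fst w - snd z * snd w, fst z * snd w + snd z * fst w).
Definition Cconj (z : C) : C := (fst z, - snd z).
Definition Cmod (z : C) : R := sqrt (fst z ^ 2 + snd z ^ 2).
Definition C0 : C := (0, 0).
Definition C1 : C := (1, 0).

Record CHilbert := {
  hV :> Type;
  hadd : hV -> hV -> hV;
  hzero : hV;
  hopp : hV -> hV;
  hscal : C -> hV -> hV;
  hip : hV -> hV -> C;               (* linear in the first argument *)
  hadd_assoc : forall u v w, hadd u (hadd v w) = hadd (hadd u v) w;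
  hadd_comm : forall u v, hadd u v = hadd v u;
  hadd_0 : forall u, hadd u hzero = u;
  hadd_opp : forall u, hadd u (hopp u) = hzero;
  hscal_assoc : forall a b v, hscal a (hscal b v) = hscal (Cmul a b) v;
  hscal_1 : forall v, hscal C1 v = v;
  hscal_addv : forall a u v, hscal a (hadd u v) = hadd (hscal a u) (hscal a v);
  hscal_adds : forall a b v, hscal (Cadd a b) v = hadd (hscal a v) (hscal b v);
  hip_add : forall u v w, hip (hadd u v) w = Cadd (hip u w) (hip v w);
  hip_scal : forall a u w, hip (hscal a u) w = Cmul a (hip u w);
  hip_conj : forall u v, hip u v = Cconj (hip v u);
  hip_pos : forall u, 0 <= Cre (hip u u);
  hip_def : forall u, hip u u = C0 -> u = hzero;
  hcomplete : forall s : nat -> hV,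
    (forall eps, eps > 0 -> exists N, forall m n, (N <= m)%nat -> (N <= n)%nat ->
        sqrt (Cre (hip (hadd (s m) (hopp (s n))) (hadd (s m) (hopp (s n))))) < eps) ->
    exists l, forall eps, eps > 0 -> exists N, forall n, (N <= n)%nat ->
        sqrt (Cre (hip (hadd (s n) (hopp l)) (hadd (s n) (hopp l)))) < eps
}.

Arguments hadd {c}. Arguments hzero {c}. Arguments hopp {c}.
Arguments hscal {c}. Arguments hip {c}.

Definition hnorm {H : CHilbert} (x : H) : R := sqrt (Cre (hip x x)).
Definition hsub {H : CHilbert} (x y : H) : H := hadd x (hopp y).

Definition is_linear {H : CHilbert} (T : H -> H) : Prop :=
  (forall u v, T (hadd u v) = hadd (T u) (T v)) /\
  (forall a v, T (hscal a v) = hscal a (T v)).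
Definition is_bounded_op {H : CHilbert} (T : H -> H) : Prop :=
  is_linear T /\ exists M, forall x, hnorm (T x) <= M * hnorm x.
Definition is_adjoint {H : CHilbert} (T S : H -> H) : Prop :=
  forall x y, hip (T x) y = hip x (S y).

(* ---- supremum / infimum of sets of reals (0 if not bounded or empty) ---- *)
Definition Rsup (E : R -> Prop) : R :=
  match excluded_middle_informative (bound E /\ exists x, E x) with
  | left h => proj1_sig (completeness E (proj1 h) (proj2 h))
  | right _ => 0
  end.
Definition Rinf (E : R -> Prop) : R := - Rsup (fun r => E (- r)).

Definition num_radius {H : CHilbert} (T : H -> H) : R :=
  Rsup (fun r => exists x : H, hnorm x = 1 /\ r = Cmod (hip (T x) x)).
Definition op_norm {H : CHilbert} (T : H -> H) : R :=
  Rsup (fun r => exists x : H, hnorm x = 1 /\ r = hnorm (T x)).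
Definition alpha {H : CHilbert} (T : H -> H) : R :=
  Rinf (fun r => exists x : H, hnorm x = 1 /\ r = hnorm (T x) ^ 2).
(* Cartesian parts, given the adjoint Ts of T *)
Definition re_part {H : CHilbert} (T Ts : H -> H) : H -> H :=
  fun x => hscal (1/2, 0) (hadd (T x) (Ts x)).
Definition im_part {H : CHilbert} (T Ts : H -> H) : H -> H :=
  fun x => hscal (0, -(1/2)) (hsub (T x) (Ts x)).   (* 1/(2i) = -i/2 *)
Definition Dq {H : CHilbert} (T Ts : H -> H) : R :=
  2 * Rmin (op_norm (re_part T Ts) ^ 2) (op_norm (im_part T Ts) ^ 2).

(* Main.v *)
Require Import Defs.
From Stdlib Require Import Reals Lra Psatz ClassicalEpsilon Classical.
Open Scope R_scope.

Definition rip {H : CHilbert} (u v : H) : R := fst (hip u v).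
Definition iip {H : CHilbert} (u v : H) : R := snd (hip u v).
Definition nsq {H : CHilbert} (u : H) : R := rip u u.

Lemma rip_addl {H : CHilbert} (u v w : H) : rip (hadd u v) w = rip u w + rip v w.
Proof. unfold rip. rewrite hip_add. reflexivity. Qed.
Lemma iip_addl {H : CHilbert} (u v w : H) : iip (hadd u v) w = iip u w + iip v w.
Proof. unfold iip. rewrite hip_add. reflexivity. Qed.
Lemma rip_scall {H : CHilbert} a (u w : H) : rip (hscal a u) w = fst a * rip u w - snd a * iip u w.
Proof. unfold rip, iip. rewrite hip_scal. reflexivity. Qed.
Lemma iip_scall {H : CHilbert} a (u w : H) : iip (hscal a u) w = fst a * iip u w + snd a * rip u w.
Proof. unfold rip, iip. rewrite hip_scal. reflexivity. Qed.
Lemma rip_sym {H : CHilbert} (u v : H) : rip u v = rip v u.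
Proof. unfold rip. rewrite hip_conj. reflexivity. Qed.
Lemma iip_asym {H : CHilbert} (u v : H) : iip u v = - iip v u.
Proof. unfold iip. rewrite hip_conj. reflexivity. Qed.
Lemma iip_self {H : CHilbert} (u : H) : iip u u = 0.
Proof. pose proof (iip_asym u u). lra. Qed.
Lemma rip_addr {H : CHilbert} (u v w : H) : rip w (hadd u v) = rip w u + rip w v.
Proof. rewrite !(rip_sym w). apply rip_addl. Qed.
Lemma iip_addr {H : CHilbert} (u v w : H) : iip w (hadd u v) = iip w u + iip w v.
Proof. rewrite !(iip_asym w), iip_addl. lra. Qed.
Lemma rip_scalr {H : CHilbert} a (u w : H) : rip w (hscal a u) = fst a * rip w u + snd a * iip w u.
Proof. rewrite !(rip_sym w), rip_scall, (iip_asym u). lra. Qed.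
Lemma iip_scalr {H : CHilbert} a (u w : H) : iip w (hscal a u) = fst a * iip w u - snd a * rip w u.
Proof. rewrite !(iip_asym w), iip_scall, (rip_sym u). lra. Qed.
Lemma hip_zerol {H : CHilbert} (w : H) : hip hzero w = C0.
Proof.
  pose proof (hip_add H hzero hzero w) as E. rewrite hadd_0 in E.
  destruct (hip hzero w) as [p q]. unfold Cadd in E; simpl in E. injection E; intros.
  unfold C0; f_equal; lra.
Qed.
Lemma rip_zerol {H : CHilbert} (w : H) : rip hzero w = 0.
Proof. unfold rip; rewrite hip_zerol; reflexivity. Qed.
Lemma iip_zerol {H : CHilbert} (w : H) : iip hzero w = 0.
Proof. unfold iip; rewrite hip_zerol; reflexivity. Qed.
Lemma rip_oppl {H : CHilbert} (u w : H) : rip (hopp u) w = - rip u w.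
Proof. pose proof (rip_addl u (hopp u) w). rewrite hadd_opp, rip_zerol in H0. lra. Qed.
Lemma iip_oppl {H : CHilbert} (u w : H) : iip (hopp u) w = - iip u w.
Proof. pose proof (iip_addl u (hopp u) w). rewrite hadd_opp, iip_zerol in H0. lra. Qed.
Lemma rip_oppr {H : CHilbert} (u w : H) : rip w (hopp u) = - rip w u.
Proof. rewrite !(rip_sym w). apply rip_oppl. Qed.
Lemma iip_oppr {H : CHilbert} (u w : H) : iip w (hopp u) = - iip w u.
Proof. rewrite !(iip_asym w), iip_oppl. lra. Qed.
Lemma nsq_pos {H : CHilbert} (u : H) : 0 <= nsq u.
Proof. apply hip_pos. Qed.
Lemma hnorm_sq {H : CHilbert} (u : H) : hnorm u ^ 2 = nsq u.
Proof. unfold hnorm. rewrite <- Rsqr_pow2. apply Rsqr_sqrt. apply hip_pos. Qed.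
Lemma hnorm_nsq {H : CHilbert} (u : H) : hnorm u = sqrt (nsq u).
Proof. reflexivity. Qed.
Lemma hnorm_pos {H : CHilbert} (u : H) : 0 <= hnorm u.
Proof. apply sqrt_pos. Qed.
Lemma nsq0 {H : CHilbert} (u : H) : nsq u = 0 -> u = hzero.
Proof. intro E. apply hip_def. pose proof (iip_self u). unfold nsq, rip, iip in *.
  destruct (hip u u); simpl in *; subst; reflexivity. Qed.

Ltac ipsimpl := repeat (rewrite ?rip_addl, ?iip_addl, ?rip_scall, ?iip_scall,
  ?rip_addr, ?iip_addr, ?rip_scalr, ?iip_scalr, ?rip_oppl, ?iip_oppl, ?rip_oppr, ?iip_oppr in *); cbn [fst snd] in *.

Lemma cs_re {H : CHilbert} (u v : H) : rip u v ^ 2 <= nsq u * nsq v.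
Proof.
  assert (K : forall t, 0 <= nsq u - 2 * t * rip u v + t^2 * nsq v).
  { intro t. pose proof (nsq_pos (hadd u (hscal (-t, 0) v))) as P. unfold nsq in *.
    ipsimpl. rewrite (rip_sym v u), (iip_self v) in P. nra. }
  pose proof (nsq_pos u); pose proof (nsq_pos v).
  destruct (Req_dec (nsq v) 0) as [E|E].
  - destruct (Req_dec (rip u v) 0) as [F|F].
    + rewrite F, E. lra.
    + exfalso. pose proof (K ((nsq u + 1) / (2 * rip u v))) as K'. rewrite E in K'.
      replace (nsq u - 2 * ((nsq u + 1) / (2 * rip u v)) * rip u v + ((nsq u + 1) / (2 * rip u v)) ^ 2 * 0) with (-1) in K' by (field; auto). lra.
  - pose proof (K (rip u v / nsq v)) as K'.
    assert (0 < nsq v) by lra.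
    apply (Rmult_le_compat_r (nsq v)) in K'; [|lra].
    replace ((nsq u - 2 * (rip u v / nsq v) * rip u v + (rip u v / nsq v) ^ 2 * nsq v) * nsq v)
      with (nsq u * nsq v - rip u v ^ 2) in K' by (field; lra). lra.
Qed.

Lemma Rsup_ub (E : R -> Prop) x : bound E -> E x -> x <= Rsup E.
Proof.
  intros B Ex. unfold Rsup. destruct excluded_middle_informative as [h|h].
  - lazymatch goal with |- context [completeness ?a ?b ?c] => destruct (proj2_sig (completeness a b c)) as [U _] end. apply U; auto.
  - exfalso; apply h; split; eauto.
Qed.
Lemma Rsup_le (E : R -> Prop) M : (forall x, E x -> x <= M) -> 0 <= M -> Rsup E <= M.
Proof.
  intros U P. unfold Rsup. destruct excluded_middle_informative as [h|h].
  - lazymatch goal with |- context [completeness ?a ?b ?c] => destruct (proj2_sig (completeness a b c)) as [_ L] end. apply L. intros x Ex; auto.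
  - auto.
Qed.
Lemma Rsup_nonneg (E : R -> Prop) : (forall x, E x -> 0 <= x) -> 0 <= Rsup E.
Proof.
  intros P. unfold Rsup. destruct excluded_middle_informative as [h|h].
  - pose proof h as [B [x Ex]]. lazymatch goal with |- context [completeness ?a ?b ?c] => destruct (proj2_sig (completeness a b c)) as [U _] end.
    apply Rle_trans with x; auto.
  - lra.
Qed.
Lemma Rsup_empty (E : R -> Prop) : (forall x, ~ E x) -> Rsup E = 0.
Proof.
  intros P. unfold Rsup. destruct excluded_middle_informative as [h|h]; auto.
  pose proof h as [_ [x Ex]]. exfalso; eapply P; eauto.
Qed.

Lemma sqrt_le_of_sq x y : 0 <= y -> x <= y ^ 2 -> sqrt x <= y.
Proof. intros Py Hx. rewrite <- (sqrt_pow2 y Py). apply sqrt_le_1_alt. auto. Qed.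

Lemma alpha_le {H : CHilbert} (T : H -> H) x : hnorm x = 1 -> alpha T <= nsq (T x).
Proof.
  intros Hx. unfold alpha, Rinf.
  assert (- nsq (T x) <= Rsup (fun r => exists x0 : H, hnorm x0 = 1 /\ - r = hnorm (T x0) ^ 2)).
  { apply Rsup_ub.
    - exists 0. intros r [y [_ E]]. pose proof (nsq_pos (T y)). rewrite hnorm_sq in E. lra.
    - exists x. split; auto. rewrite hnorm_sq. lra. }
  lra.
Qed.
Lemma alpha_nonneg {H : CHilbert} (T : H -> H) : 0 <= alpha T.
Proof.
  unfold alpha, Rinf.
  assert (Rsup (fun r => exists x0 : H, hnorm x0 = 1 /\ - r = hnorm (T x0) ^ 2) <= 0).
  { apply Rsup_le; [|lra]. intros r [y [_ E]]. pose proof (nsq_pos (T y)). rewrite hnorm_sq in E. lra. }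
  lra.
Qed.
Lemma alpha_empty {H : CHilbert} (T : H -> H) : (forall x : H, hnorm x <> 1) -> alpha T = 0.
Proof.
  intros P. unfold alpha, Rinf. rewrite Rsup_empty. lra. intros r [y [Hy _]]. eapply P; eauto.
Qed.

Lemma nsq_rscal {H : CHilbert} (c : R) (u : H) : nsq (hscal (c, 0) u) = c ^ 2 * nsq u.
Proof. unfold nsq. ipsimpl. rewrite iip_self. ring. Qed.

Lemma normalize {H : CHilbert} (u : H) : 0 < hnorm u ->
  hnorm (hscal (/ hnorm u, 0) u) = 1.
Proof.
  intros P. rewrite hnorm_nsq, nsq_rscal. rewrite <- hnorm_sq.
  replace ((/ hnorm u) ^ 2 * hnorm u ^ 2) with 1 by (field; lra). apply sqrt_1.
Qed.

Lemma polar_T1 {H : CHilbert} (T Ts : H -> H) (hl : is_linear T) (hTs : is_adjoint T Ts) (x : H) (s : R) :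
  let v := re_part T Ts x in let y := hscal (s, 0) v in
  rip (T (hadd x y)) (hadd x y) - rip (T (hadd x (hscal (-1,0) y))) (hadd x (hscal (-1,0) y))
   = 4 * s * nsq v.
Proof.
  intros v y. destruct hl as [ha hs].
  rewrite ha, ha, hs.
  assert (F : rip (T y) x = rip y (Ts x)) by (unfold rip; rewrite hTs; reflexivity).
  unfold nsq, y, v, re_part in *. ipsimpl.
  rewrite ?iip_self.
  rewrite F, (rip_sym (Ts x) (T x)), (iip_asym (Ts x) (T x)). lra.
Qed.

Lemma polar_T2 {H : CHilbert} (T Ts : H -> H) (hl : is_linear T) (hTs : is_adjoint T Ts) (x : H) (s : R) :
  let v := im_part T Ts x in let y := hscal (s, 0) v in
  iip (T (hadd x y)) (hadd x y) - iip (T (hadd x (hscal (-1,0) y))) (hadd x (hscal (-1,0) y))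
   = 4 * s * nsq v.
Proof.
  intros v y. destruct hl as [ha hs].
  rewrite ha, ha, hs.
  assert (F : iip (T y) x = iip y (Ts x)) by (unfold iip; rewrite hTs; reflexivity).
  unfold nsq, y, v, im_part, hsub in *. ipsimpl.
  rewrite ?iip_self.
  rewrite F, (rip_sym (Ts x) (T x)), (iip_asym (Ts x) (T x)). lra.
Qed.

Lemma polar_norm {H : CHilbert} (x v : H) (s : R) :
  nsq (hadd x (hscal (s,0) v)) + nsq (hadd x (hscal (-1,0) (hscal (s,0) v))) = 2 * nsq x + 2 * s^2 * nsq v.
Proof. unfold nsq. ipsimpl. rewrite ?iip_self, (rip_sym v x), (iip_asym v x). lra. Qed.

Lemma parallelogram_T {H : CHilbert} (T Ts : H -> H) (x : H) :
  nsq (T x) + nsq (Ts x) = 2 * (nsq (re_part T Ts x) + nsq (im_part T Ts x)).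
Proof. unfold nsq, re_part, im_part, hsub. ipsimpl. rewrite ?iip_self, (rip_sym (Ts x) (T x)), (iip_asym (Ts x) (T x)). lra. Qed.

Lemma real_polar (w a n : R) : 0 <= w -> 0 <= a -> 0 <= n ->
  (forall s, 4 * s * a <= w * (2 * n + 2 * s^2 * a)) -> a <= w^2 * n.
Proof.
  intros Pw Pa Pn K. destruct (Req_dec w 0) as [E|E].
  - subst. specialize (K 1). nra.
  - specialize (K (/ w)). assert (0 < w) by lra.
    apply (Rmult_le_compat_r w) in K; [|lra].
    replace (4 * / w * a * w) with (4 * a) in K by (field; lra).
    replace (w * (2 * n + 2 * (/ w) ^ 2 * a) * w) with (2 * w^2 * n + 2 * a) in K by (field; lra).
    lra.
Qed.

Lemma abs_le_of_sq a b : a ^ 2 <= b ^ 2 -> 0 <= b -> Rabs a <= b.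
Proof. intros. unfold Rabs; destruct (Rcase_abs a); nra. Qed.
Lemma abs_bounds r b : Rabs r <= b -> - b <= r /\ r <= b.
Proof. unfold Rabs; destruct (Rcase_abs r); intros; lra. Qed.

Lemma rip_bound {H : CHilbert} (u v : H) : Rabs (rip u v) <= hnorm u * hnorm v.
Proof.
  apply abs_le_of_sq. rewrite Rpow_mult_distr, !hnorm_sq. apply cs_re.
  pose proof (hnorm_pos u); pose proof (hnorm_pos v); nra.
Qed.
Lemma iip_bound {H : CHilbert} (u v : H) : Rabs (iip u v) <= hnorm u * hnorm v.
Proof.
  replace (iip u v) with (rip u (hscal (0,1) v)) by (ipsimpl; lra).
  replace (hnorm v) with (hnorm (hscal (0,1) v)). apply rip_bound.
  rewrite !hnorm_nsq. f_equal. unfold nsq. ipsimpl. rewrite iip_self. lra.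
Qed.
Lemma rip_le_Cmod {H : CHilbert} (u v : H) : Rabs (rip u v) <= Cmod (hip u v).
Proof.
  unfold Cmod, rip. rewrite <- sqrt_Rsqr_abs. apply sqrt_le_1_alt. unfold Rsqr.
  pose proof (pow2_ge_0 (snd (hip u v))). lra.
Qed.
Lemma iip_le_Cmod {H : CHilbert} (u v : H) : Rabs (iip u v) <= Cmod (hip u v).
Proof.
  unfold Cmod, iip. rewrite <- sqrt_Rsqr_abs. apply sqrt_le_1_alt. unfold Rsqr.
  pose proof (pow2_ge_0 (fst (hip u v))). lra.
Qed.

Theorem proposition2p2 (H : CHilbert) (T Ts : H -> H)
  (hT : is_bounded_op T) (hTs : is_adjoint T Ts) :
  0 <= 2 * num_radius T ^ 2 - Rmax (alpha T) (alpha Ts) + Dq T Ts /\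
  op_norm T <= sqrt (2 * num_radius T ^ 2 - Rmax (alpha T) (alpha Ts) + Dq T Ts) /\
  sqrt (2 * num_radius T ^ 2 - Rmax (alpha T) (alpha Ts) + Dq T Ts) <= 2 * num_radius T.
Proof.
  destruct hT as [hl [M0 HM0]].
  set (M := Rmax M0 0).
  assert (PM : 0 <= M) by apply Rmax_r.
  assert (HM : forall x, hnorm (T x) <= M * hnorm x).
  { intro x. pose proof (HM0 x). pose proof (hnorm_pos x). assert (M0 <= M) by apply Rmax_l. nra. }
  clear HM0.
  assert (HMs : forall x, hnorm (Ts x) <= M * hnorm x).
  { intro x. set (p := Ts x).
    assert (E : rip (T p) x = nsq p) by (unfold rip, nsq, p; rewrite hTs; reflexivity).
    pose proof (cs_re (T p) x) as C1. rewrite E, <- !hnorm_sq in C1.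
    pose proof (HM p). pose proof (hnorm_pos p). pose proof (hnorm_pos x). pose proof (hnorm_pos (T p)).
    assert (hnorm (T p) ^ 2 <= (M * hnorm p) ^2) by (apply pow_incr; lra).
    destruct (Rle_dec (hnorm p) (M * hnorm x)) as [|N]; auto. exfalso. apply Rnot_le_lt in N.
    assert (0 < hnorm p) by nra.
    assert (hnorm p ^ 2 * hnorm p ^ 2 <= (M * hnorm p) ^ 2 * hnorm x ^ 2).
    { apply Rle_trans with (hnorm (T p) ^ 2 * hnorm x ^ 2); [lra|]. apply Rmult_le_compat_r; [nra|lra]. }
    assert (hnorm p ^ 2 <= (M * hnorm x) ^ 2) by nra.
    assert (0 <= M * hnorm x) by nra.
    assert (0 < (hnorm p - M*hnorm x) * (hnorm p + M*hnorm x)) by (apply Rmult_lt_0_compat; lra).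
    nra. }
  set (w := num_radius T).
  assert (Pw : 0 <= w).
  { apply Rsup_nonneg. intros r [x [_ E]]. rewrite E. apply sqrt_pos. }
  assert (Bw : forall x, hnorm x = 1 -> Cmod (hip (T x) x) <= w).
  { intros x Hx. apply Rsup_ub; [|eauto].
    exists (2 * M). intros r [y [Hy E]]. rewrite E. apply sqrt_le_of_sq; [lra|].
    pose proof (rip_bound (T y) y) as R1. pose proof (iip_bound (T y) y) as R2.
    pose proof (HM y). rewrite Hy in *. pose proof (hnorm_pos (T y)).
    apply abs_bounds in R1; apply abs_bounds in R2. unfold rip, iip in *. nra. }
  assert (Hz : forall z, Rabs (rip (T z) z) <= w * nsq z /\ Rabs (iip (T z) z) <= w * nsq z).
  { intro z. destruct (Req_dec (hnorm z) 0) as [E|E].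
    - assert (nsq z = 0) by (rewrite <- hnorm_sq, E; ring).
      apply nsq0 in H0. subst z. rewrite rip_sym, iip_asym, rip_zerol, iip_zerol, Rabs_R0.
      split; [|rewrite Ropp_0, Rabs_R0]; pose proof (nsq_pos (@hzero H)); nra.
    - pose proof (hnorm_pos z). assert (Pz : 0 < hnorm z) by lra.
      set (c := / hnorm z). set (u := hscal (c, 0) z).
      assert (Hu : hnorm u = 1) by apply (normalize z Pz).
      assert (Tu : T u = hscal (c, 0) (T z)) by (apply hl).
      assert (Er : rip (T u) u = c ^ 2 * rip (T z) z) by (rewrite Tu; unfold u; ipsimpl; lra).
      assert (Ei : iip (T u) u = c ^ 2 * iip (T z) z) by (rewrite Tu; unfold u; ipsimpl; lra).
      assert (c ^ 2 * hnorm z ^ 2 = 1) by (unfold c; field; lra).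
      clearbody u c.
      pose proof (Bw u Hu). pose proof (rip_le_Cmod (T u) u). pose proof (iip_le_Cmod (T u) u).
      rewrite Er in *. rewrite Ei in *. rewrite Rabs_mult in *.
      rewrite (Rabs_right (c ^ 2)) in * by (apply Rle_ge, pow2_ge_0).
      rewrite <- hnorm_sq.
      pose proof (pow2_ge_0 (hnorm z)). match goal with h : c ^ 2 * hnorm z ^ 2 = 1 |- _ => rename h into Ec end.
      split.
      + replace (Rabs (rip (T z) z)) with ((c ^ 2 * Rabs (rip (T z) z)) * hnorm z ^ 2) by (transitivity (Rabs (rip (T z) z) * (c ^ 2 * hnorm z ^ 2)); [ring | rewrite Ec; ring]).
        apply Rmult_le_compat_r; lra.
      + replace (Rabs (iip (T z) z)) with ((c ^ 2 * Rabs (iip (T z) z)) * hnorm z ^ 2) by (transitivity (Rabs (iip (T z) z) * (c ^ 2 * hnorm z ^ 2)); [ring | rewrite Ec; ring]).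
        apply Rmult_le_compat_r; lra. }
  assert (P1 : forall x, nsq (re_part T Ts x) <= w ^ 2 * nsq x).
  { intro x. apply real_polar; auto using nsq_pos. intro s.
    pose proof (polar_T1 T Ts hl hTs x s) as E. cbv zeta in E.
    pose proof (polar_norm x (re_part T Ts x) s) as N.
    destruct (Hz (hadd x (hscal (s, 0) (re_part T Ts x)))) as [A1 _].
    destruct (Hz (hadd x (hscal (-1, 0) (hscal (s, 0) (re_part T Ts x))))) as [A2 _].
    apply abs_bounds in A1; apply abs_bounds in A2. nra. }
  assert (P2 : forall x, nsq (im_part T Ts x) <= w ^ 2 * nsq x).
  { intro x. apply real_polar; auto using nsq_pos. intro s.
    pose proof (polar_T2 T Ts hl hTs x s) as E. cbv zeta in E.
    pose proof (polar_norm x (im_part T Ts x) s) as N.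
    destruct (Hz (hadd x (hscal (s, 0) (im_part T Ts x)))) as [_ A1].
    destruct (Hz (hadd x (hscal (-1, 0) (hscal (s, 0) (im_part T Ts x))))) as [_ A2].
    apply abs_bounds in A1; apply abs_bounds in A2. nra. }
  assert (OP : forall A : H -> H, (forall x, nsq (A x) <= w ^ 2 * nsq x) ->
     0 <= op_norm A /\ op_norm A <= w /\ forall x, hnorm x = 1 -> nsq (A x) <= op_norm A ^ 2).
  { intros A HA.
    assert (U : forall x, hnorm x = 1 -> hnorm (A x) <= w).
    { intros x Hx. pose proof (HA x) as HAx. rewrite <- (hnorm_sq x), Hx in HAx. apply sqrt_le_of_sq; auto. change (nsq (A x) <= w ^ 2). nra. }
    split; [|split].
    - apply Rsup_nonneg. intros r [x [_ E]]. rewrite E. apply hnorm_pos.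
    - apply Rsup_le; auto. intros r [x [Hx E]]. rewrite E. auto.
    - intros x Hx. rewrite <- hnorm_sq. apply pow_incr. split; [apply hnorm_pos|].
      apply Rsup_ub; [|eauto]. exists w. intros r [y [Hy E]]. rewrite E. auto. }
  destruct (OP _ P1) as [O1p [O1w O1]]. destruct (OP _ P2) as [O2p [O2w O2]]. clear OP.
  set (Q0 := 2 * w ^ 2 + Dq T Ts).
  assert (Dpos : 0 <= Dq T Ts /\ Dq T Ts <= 2 * w ^ 2).
  { unfold Dq, Rmin. destruct Rle_dec.
    - split; [nra|]. assert (op_norm (re_part T Ts) ^ 2 <= w ^ 2) by (apply pow_incr; lra). lra.
    - split; [nra|]. assert (op_norm (im_part T Ts) ^ 2 <= w ^ 2) by (apply pow_incr; lra). lra. }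
  assert (KEY : forall x, hnorm x = 1 -> nsq (T x) + nsq (Ts x) <= Q0).
  { intros x Hx. rewrite parallelogram_T. unfold Q0, Dq.
    pose proof (P1 x); pose proof (P2 x); pose proof (O1 x Hx); pose proof (O2 x Hx).
    rewrite <- (hnorm_sq x), Hx in *.
    unfold Rmin; destruct Rle_dec; lra. }
  assert (Q0pos : 0 <= Q0) by (unfold Q0; nra).
  assert (Hq2 : forall x, hnorm x = 1 -> nsq (T x) + alpha T <= Q0).
  { intros x Hx. destruct (Req_dec (hnorm (T x)) 0) as [E|E].
    - assert (nsq (T x) = 0) by (rewrite <- hnorm_sq, E; ring).
      pose proof (alpha_le T x Hx). lra.
    - pose proof (hnorm_pos (T x)). assert (Pz : 0 < hnorm (T x)) by lra.
      set (y := hscal (/ hnorm (T x), 0) (T x)).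
      assert (Hy : hnorm y = 1) by apply (normalize _ Pz).
      assert (Ey : rip (Ts y) x = hnorm (T x)).
      { rewrite rip_sym. unfold rip. rewrite <- hTs. fold (rip (T x) y). unfold y. ipsimpl.
        fold (nsq (T x)). rewrite <- hnorm_sq. field. lra. }
      pose proof (cs_re (Ts y) x) as CS. rewrite Ey, <- (hnorm_sq x), Hx in CS.
      rewrite <- hnorm_sq. pose proof (KEY y Hy). pose proof (alpha_le T y Hy). nra. }
  assert (Hq : forall x, hnorm x = 1 -> nsq (T x) <= Q0 - Rmax (alpha T) (alpha Ts)).
  { intros x Hx. pose proof (Hq2 x Hx). pose proof (KEY x Hx). pose proof (alpha_le Ts x Hx).
    unfold Rmax; destruct Rle_dec; lra. }
  assert (Qpos : 0 <= Q0 - Rmax (alpha T) (alpha Ts)).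
  { destruct (classic (exists x : H, hnorm x = 1)) as [[x Hx]|NE].
    - pose proof (Hq x Hx). pose proof (nsq_pos (T x)). lra.
    - assert (F : forall x : H, hnorm x <> 1) by (intros x Hx; apply NE; eauto).
      rewrite (alpha_empty T F), (alpha_empty Ts F), Rmax_left; lra. }
  replace (2 * w ^ 2 - Rmax (alpha T) (alpha Ts) + Dq T Ts) with (Q0 - Rmax (alpha T) (alpha Ts)) by (unfold Q0; ring).
  split; [|split]; auto.
  - apply Rsup_le; [|apply sqrt_pos]. intros r [x [Hx E]]. rewrite E, hnorm_nsq.
    apply sqrt_le_1_alt. auto.
  - apply sqrt_le_of_sq; [lra|]. unfold Q0.
    pose proof (alpha_nonneg T). pose proof (Rmax_l (alpha T) (alpha Ts)). lra.
Qed.
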